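(* Let $n\geq 2$, let $X\subset\mathbb{R}^n$ be finite, equipped with the Euclidean metric $d$, let $k\in\mathbb{N}$ and $\epsilon>0$, and let $S\in\mathcal{Q}(\epsilon)$. If $|S^1_X|>k$, then $S_X\subset\mathcal{C}(\epsilon)$. If $|S^{\mathfrak{m}}_X|\leq k$ or $S_X=\emptyset$, then $S_X\subset\mathcal{N}(\epsilon)$.
   Context: $\mathcal{Q}(\epsilon)$ is the collection of closed cubes $\{(x_1,\dots,x_n)\in\mathbb{R}^n: j_i\frac{\epsilon}{2\sqrt n}\le x_i\le (j_i+1)\frac{\epsilon}{2\sqrt n},\ i=1,\dots,n\}$ for $j\in\mathbb{Z}^n$. For a cube $S\in\mathcal{Q}(\epsilon)$ and an integer $m\geq 0$, $S^m=\{x\in\mathbb{R}^n:\max_i|x_i-s_i|\le m\frac{\epsilon}{2\sqrt n}\text{ for some } s\in S\}$. For $Y,A\subset\mathbb{R}^n$, $Y_A=Y\cap A$; thus $S_X=S\cap X$, $S^m_X=S^m\cap X$. $\mathfrak{m}$ is the smallest integer with $\mathfrak{m}\geq 2\sqrt n$. The set of core points is $\mathcal{C}(\epsilon)=\{p\in X: |\{q\in X: d(p,q)\le\epsilon\}|>k\}$ and the set of noise points is $\mathcal{N}(\epsilon)=X\setminus\mathcal{C}(\epsilon)$. *)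

(* Defs.v *)
From HB Require Import structures.
From mathcomp Require Import all_boot all_order all_algebra.
From mathcomp Require Import finmap.
From mathcomp Require Import boolp reals.
Set Implicit Arguments. Unset Strict Implicit. Unset Printing Implicit Defensive.
Import Order.TTheory GRing.Theory Num.Theory.
Local Open Scope ring_scope.
Local Open Scope fset_scope.

Section Defs.
Variables (R : realType) (n : nat).

Definition edist (x y : 'rV[R]_n) : R :=
  Num.sqrt (\sum_(i < n) (x 0 i - y 0 i) ^+ 2).

Definition side (eps : R) : R := eps / (2 * Num.sqrt n%:R).

(* The cube S of Q(eps) with integer index vector j. *)
Definition in_cube (eps : R) (j : 'I_n -> int) (x : 'rV[R]_n) : bool :=
  [forall i, ((j i)%:~R * side eps <= x 0 i) && (x 0 i <= ((j i)%:~R + 1) * side eps)].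

Definition in_cube_nbhd (eps : R) (j : 'I_n -> int) (m : nat) (x : 'rV[R]_n) : Prop :=
  exists s : 'rV[R]_n, in_cube eps j s /\
    (\big[Num.max/0]_(i < n) `|x 0 i - s 0 i| <= m%:R * side eps).

Definition cubeX (X : {fset 'rV[R]_n}) (eps : R) (j : 'I_n -> int) : {fset 'rV[R]_n} :=
  [fset x in X | in_cube eps j x].
Definition cube_nbhdX (X : {fset 'rV[R]_n}) (eps : R) (j : 'I_n -> int) (m : nat)
  : {fset 'rV[R]_n} :=
  [fset x in X | `[< in_cube_nbhd eps j m x >]].

Definition mfrak : nat := `|Num.ceil (2 * Num.sqrt (n%:R : R))|%N.

Definition core (X : {fset 'rV[R]_n}) (eps : R) (k : nat) : {fset 'rV[R]_n} :=
  [fset p in X | ltn k #|` [fset q in X | edist p q <= eps]|].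
Definition noise (X : {fset 'rV[R]_n}) (eps : R) (k : nat) : {fset 'rV[R]_n} :=
  X `\` core X eps k.

End Defs.

(* Main.v *)
Require Import Defs.
From HB Require Import structures.
From mathcomp Require Import all_boot all_order all_algebra.
From mathcomp Require Import finmap.
From mathcomp Require Import boolp reals.
From mathcomp Require Import lra.
Import Order.TTheory GRing.Theory Num.Theory.
Local Open Scope ring_scope.
Local Open Scope fset_scope.

Theorem mainTheorem1 (R : realType) (n : nat) (X : {fset 'rV[R]_n}) (k : nat)
    (eps : R) (j : 'I_n -> int) :
  (2 <= n)%N -> 0 < eps ->
  ((k < #|` cube_nbhdX X eps j 1|)%N ->
     cubeX X eps j `<=` core X eps k) /\
  (((#|` cube_nbhdX X eps j (mfrak R n)| <= k)%N \/ cubeX X eps j = fset0) ->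
     cubeX X eps j `<=` noise X eps k).
Proof.
move=> n2 eps0; rewrite /cubeX /core /noise /cube_nbhdX.
have sn0 : 0 < Num.sqrt (n%:R : R) by rewrite sqrtr_gt0 ltr0n; case: n n2 {X j}.
set s := @side R n eps.
have s0 : 0 < s by rewrite /s /side divr_gt0 // mulr_gt0.
have es : eps = 2 * Num.sqrt (n%:R : R) * s.
  by rewrite /s /side mulrC divfK // gt_eqF // mulr_gt0.
split.
- move=> hk; apply/fsubsetP => p; rewrite !(in_fset, inE) /= => /andP [pX pS].
  rewrite pX /=.
  apply: (leq_trans hk); apply: fsubset_leq_card; apply/fsubsetP => q.
  rewrite !(in_fset, inE) /= => /andP [qX /asboolP [t [tS]]] /=.
  rewrite qX /=.
  move/bigmax_leP => [_ hq].
  have hi : forall i, `|q 0 i - p 0 i| <= 2 * s.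
    move=> i; move: (hq i isT); move/forallP: pS => /(_ i) /andP [p1 p2].
    move/forallP: tS => /(_ i) /andP [t1 t2].
    rewrite mul1r => h.
    rewrite ler_norml; move: h; rewrite ler_norml => /andP [h1 h2].
    rewrite mulrDl mul1r in p2 t2.
    rewrite /s; apply/andP; split; lra.
  rewrite /edist es.
  have -> : 2 * Num.sqrt (n%:R : R) * s = Num.sqrt ((2 * s) ^+ 2 * n%:R).
    have s2 : 0 <= 2 * s by rewrite mulr_ge0 // ltW.
    rewrite sqrtrM ?sqr_ge0 // sqrtr_sqr (ger0_norm s2).
    by rewrite mulrAC.
  rewrite ler_sqrt; last by rewrite mulr_ge0 ?sqr_ge0.
  have -> : (2 * s) ^+ 2 * n%:R = \sum_(i < n) (2 * s) ^+ 2.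
    by rewrite sumr_const card_ord mulr_natr.
  apply: ler_sum => i _.
  have s2 : 0 <= 2 * s by rewrite mulr_ge0 // ltW.
  rewrite -(real_normK (num_real (p 0 i - q 0 i))) -normrN opprB !expr2.
  by apply: ler_pM => //; apply: hi.
- move=> H; apply/fsubsetP => p pC.
  case: H => [hk|h0]; last by rewrite h0 inE in pC.
  move: pC; rewrite !(in_fset, inE) /= => /andP [pX pS].
  rewrite pX /= ?andbT -leqNgt.
  apply: leq_trans hk; apply: fsubset_leq_card; apply/fsubsetP => q.
  rewrite !(in_fset, inE) /= => /andP [qX hd]; rewrite qX /=.
  apply/asboolP; exists p; split => //.
  apply/bigmax_leP; split.
    exact: mulr_ge0 (ler0n _ _) (ltW s0).
  move=> i _.
  have hm : 2 * Num.sqrt (n%:R : R) <= (mfrak R n)%:R.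
    rewrite /mfrak natr_absz ger0_norm; first exact: ceil_ge.
    rewrite ceil_ge0; apply: lt_le_trans (ltrN10 R) _.
    by rewrite mulr_ge0 // ltW.
  apply: le_trans (ler_wpM2r (ltW s0) hm); rewrite -es.
  apply: le_trans hd; rewrite /edist.
  rewrite -normrN opprB -sqrtr_sqr; apply: ler_wsqrtr.
  rewrite (bigD1 i) //= lerDl; apply: sumr_ge0 => l _; exact: sqr_ge0.
Qed.
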